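(* Let $V$ be a vector space over a commutative field $K$, and let $m$ be a product on the tensor coalgebra $T(V)$ such that $(T(V),m,\eta,\Delta,\varepsilon)$ is a bialgebra (its unit is then $1\in V^{\otimes0}$). Define $S:T(V)\to T(V)$ by $S(1)=1$ and, for $n\ge1$ and $p_1,\dots,p_n\in V$, $$S(p_1\top\cdots\top p_n)=-\sum_{c\subseteq\{1,\dots,n-1\}}(-1)^{\mathrm{card}(c)}(p_1\top\cdots\top p_n)_c.$$ Then $S$ is an antipode for $(T(V),m,\eta,\Delta,\varepsilon)$.
   Context: $T(V)=\bigoplus_{n\ge0}V^{\otimes n}$, with $v_1\top\cdots\top v_n$ denoting $v_1\otimes\cdots\otimes v_n\in V^{\otimes n}$ and $1$ the generator of $V^{\otimes0}=K$, is the tensor coalgebra with coproduct $\Delta(v_1\top\cdots\top v_n)=\sum_{k=0}^n(v_1\top\cdots\top v_k)\otimes(v_{k+1}\top\cdots\top v_n)$ and counit $\varepsilon(1)=1$, $\varepsilon(V^{\otimes n})=0$ for $n\ge1$. For $c=\{j_1<\cdots<j_r\}\subseteq\{1,\dots,n-1\}$, $(p_1\top\cdots\top p_n)_c$ is obtained by replacing the $j$-th symbol $\top$ (counted from the left) by the product $m$ for each $j\in c$, i.e. $(p_1\top\cdots\top p_n)_c=(p_1\top\cdots\top p_{j_1})\,(p_{j_1+1}\top\cdots\top p_{j_2})\cdots(p_{j_r+1}\top\cdots\top p_n)$, products taken with $m$. *)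

(* Defs.v *)
From HB Require Import structures.
From mathcomp Require Import all_boot all_order all_algebra.
From mathcomp Require Import finmap.
From mathcomp Require Import monalg.
Set Implicit Arguments. Unset Strict Implicit. Unset Printing Implicit Defensive.
Import Order.TTheory GRing.Theory Num.Theory.
Local Open Scope ring_scope.

Section TensorCoalgebra.
Variables (K : fieldType) (I : choiceType).

(* V: the K-vector space with basis I (every vector space is of this form). *)
Definition Vsp := {malg K[I]}.
(* T(V) = (+)_n V^{(x)n}: basis = words over I; the word [:: i1;..;in]
   stands for i1 T ... T in. *)
Definition TV := {malg K[seq I]}.
(* T(V) (x) T(V): basis = pairs of words. *)
Definition TT := {malg K[(seq I * seq I)%type]}.

Definition mlift (A : choiceType) (W : lmodType K) (f : A -> W)
  (x : {malg K[A]}) : W := \sum_(a <- msupp x) x@_a *: f a.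

(* the generator 1 of V^{(x)0} = K *)
Definition tone : TV := << [::] >>.

Definition tens2 (x y : TV) : TT :=
  mlift (fun a => mlift (fun b => (<< (a, b) >> : TT)) y) x.

Definition coprod (x : TV) : TT :=
  mlift (fun w : seq I =>
           \sum_(k < (size w).+1) (<< (take k w, drop k w) >> : TT)) x.

Definition counit (x : TV) : K := x@_[::].

(* p1 T p2 T ... T pn for vectors pi in V *)
Definition vtens (ps : seq Vsp) : TV :=
  foldr (fun (p : Vsp) (t : TV) =>
           mlift (fun i : I => mlift (fun w : seq I => (<< i :: w >> : TV)) t) p)
        tone ps.

Definition mTT (m : TV -> TV -> TV) (z w : TT) : TT :=
  mlift (fun ab : seq I * seq I =>
    mlift (fun cd : seq I * seq I =>
      tens2 (m << ab.1 >> << cd.1 >>) (m << ab.2 >> << cd.2 >>)) w) z.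

(* (T(V), m, eta, Delta, eps) is a bialgebra, where eta(k) = k *: u.
   Coassociativity and counitality of (Delta, eps) hold by construction. *)
Definition is_bialgebra (m : TV -> TV -> TV) (u : TV) : Prop :=
  (forall (a : K) (x y z : TV), m (a *: x + y) z = a *: m x z + m y z) /\
  (forall (a : K) (x y z : TV), m z (a *: x + y) = a *: m z x + m z y) /\
  (forall x y z : TV, m (m x y) z = m x (m y z)) /\
  (forall x : TV, m u x = x /\ m x u = x) /\
  (forall x y : TV, coprod (m x y) = mTT m (coprod x) (coprod y)) /\
  coprod u = tens2 u u /\
  (forall x y : TV, counit (m x y) = counit x * counit y) /\
  counit u = 1.

Fixpoint mprod1 (m : TV -> TV -> TV) (x : TV) (xs : seq TV) : TV :=
  if xs is y :: xs' then m x (mprod1 m y xs') else x.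

(* (p1 T ... T pn)_c, where c is a subset of {1,..,n-1}, encoded as a
   subset of 'I_(n-1) via j |-> j+1: the j-th symbol T (from the left)
   is replaced by the product m for every j in c. *)
Definition cut_bounds (n : nat) (c : {set 'I_n.-1}) : seq nat :=
  0%N :: rcons [seq (val j).+1 | j <- enum c] n.

Definition pieces (ps : seq Vsp) (c : {set 'I_(size ps).-1}) : seq (seq Vsp) :=
  let b := cut_bounds c in
  [seq drop ab.1 (take ab.2 ps) | ab <- zip b (behead b)].

Definition cutprod (m : TV -> TV -> TV) (ps : seq Vsp)
  (c : {set 'I_(size ps).-1}) : TV :=
  let t := [seq vtens q | q <- pieces c] in mprod1 m (head 0 t) (behead t).

Definition is_antipode (m : TV -> TV -> TV) (u : TV) (S : TV -> TV) : Prop :=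
  forall x : TV,
    mlift (fun ab : seq I * seq I => m (S << ab.1 >>) << ab.2 >>) (coprod x)
      = counit x *: u
 /\ mlift (fun ab : seq I * seq I => m << ab.1 >> (S << ab.2 >>)) (coprod x)
      = counit x *: u.

End TensorCoalgebra.

(* Main.v *)
Require Import Defs.
From HB Require Import structures.
From mathcomp Require Import all_boot all_order all_algebra.
From mathcomp Require Import finmap.
From mathcomp Require Import monalg.
From mathcomp Require Import zify.
Set Implicit Arguments. Unset Strict Implicit. Unset Printing Implicit Defensive.
Import GRing.Theory.
Local Open Scope ring_scope.


Section Mlift.
Variables (K : fieldType) (A : choiceType) (W : lmodType K) (f : A -> W).

Lemma mliftEw (x : {malg K[A]}) (d : {fset A}) : (msupp x `<=` d)%fset ->
  mlift f x = \sum_(a <- d) x@_a *: f a.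
Proof.
move=> le; rewrite /mlift [LHS](big_fset_incl _ le) => //= a ad /mcoeff_outdom ->.
by rewrite scale0r.
Qed.

Lemma mliftU (a : A) : mlift f << a >> = f a.
Proof. by rewrite (mliftEw msuppU_le) big_seq_fset1 mcoeffUU scale1r. Qed.

Lemma mlift_lin (c : K) (x y : {malg K[A]}) :
  mlift f (c *: x + y) = c *: mlift f x + mlift f y.
Proof.
pose d := (msupp x `|` msupp y `|` msupp (c *: x + y))%fset.
rewrite (@mliftEw (c *: x + y) d) ?fsubsetUr //.
rewrite (@mliftEw x d); last by rewrite /d -fsetUA fsubsetUl.
rewrite (@mliftEw y d); last by rewrite /d -fsetUA fsubsetU // fsubsetUl orbT.
rewrite scaler_sumr -big_split /=; apply: eq_bigr => a _.
by rewrite mcoeffD mcoeffZ scalerDl scalerA.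
Qed.

Lemma mlift0 : mlift f 0 = 0.
Proof. by rewrite /mlift msupp0 big_seq_fset0. Qed.

Lemma mliftD x y : mlift f (x + y) = mlift f x + mlift f y.
Proof. by have := mlift_lin 1 x y; rewrite !scale1r. Qed.
Lemma mliftZ c x : mlift f (c *: x) = c *: mlift f x.
Proof. by have := mlift_lin c x 0; rewrite !addr0 mlift0 addr0. Qed.
Lemma mlift_sum (J : Type) (r : seq J) (P : pred J) (F : J -> {malg K[A]}) :
  mlift f (\sum_(j <- r | P j) F j) = \sum_(j <- r | P j) mlift f (F j).
Proof.
elim/big_rec2: _ => [|j y z _ <-]; last by rewrite mliftD.
exact: mlift0.
Qed.
End Mlift.
Definition gl (N : nat) (c : {set 'I_N}) : seq nat := [seq val j | j <- enum c].

Lemma gl_sorted N (c : {set 'I_N}) : sorted ltn (gl c).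
Proof.
apply: (subseq_sorted ltn_trans _ (iota_ltn_sorted 0 N)).
rewrite -val_enum_ord /gl map_subseq // enumT; exact: filter_subseq.
Qed.

Lemma gl_mem N (c : {set 'I_N}) (j : 'I_N) : (val j \in gl c) = (j \in c).
Proof. by rewrite /gl (mem_map val_inj) mem_enum. Qed.

Lemma gl_lt N (c : {set 'I_N}) i : i \in gl c -> (i < N)%N.
Proof. by rewrite /gl => /mapP [j _ ->]; apply: ltn_ord. Qed.

Lemma gl_notin N (c : {set 'I_N}) i : (N <= i)%N -> i \in gl c = false.
Proof. by move=> H; apply/negP => /gl_lt; rewrite ltnNge H. Qed.

Lemma gl_size N (c : {set 'I_N}) : size (gl c) = #|c|.
Proof. by rewrite /gl size_map cardE. Qed.

Definition hh N (p : 'I_N.+1) (bc : bool * {set 'I_N}) : {set 'I_N.+1} :=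
  (if bc.1 then [set p] else set0) :|: [set lift p j | j in bc.2].
Definition hh' N (p : 'I_N.+1) (c : {set 'I_N.+1}) : bool * {set 'I_N} :=
  (p \in c, [set j | lift p j \in c]).

Lemma hh_mem N (p : 'I_N.+1) bc k :
  (k \in hh p bc) = if unlift p k is Some j then j \in bc.2 else bc.1.
Proof.
case: bc => b c; rewrite /hh /= in_setU.
case: unliftP => [j ->|->].
  rewrite (mem_imset _ _ (@lift_inj _ p)).
  by case: b; rewrite ?in_set0 ?in_set1 // eq_sym (negbTE (neq_lift _ _)).
case: b; rewrite ?in_set0 ?in_set1 ?eqxx //=.
by apply/imsetP => -[j _ /eqP]; rewrite (negbTE (neq_lift _ _)).
Qed.

Lemma hh_bij N (p : 'I_N.+1) : bijective (hh p).
Proof.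
exists (hh' p).
  case=> b c; rewrite /hh' hh_mem unlift_none; congr pair.
  by apply/setP => j; rewrite inE hh_mem liftK.
move=> c; apply/setP => k; rewrite hh_mem /hh' /=.
by case: unliftP => [j ->|->]; rewrite ?inE.
Qed.

Lemma sum_sets_split (V : zmodType) N (p : 'I_N.+1) (F : {set 'I_N.+1} -> V) :
  \sum_(c : {set 'I_N.+1}) F c =
  \sum_(c : {set 'I_N}) (F (hh p (false, c)) + F (hh p (true, c))).
Proof.
rewrite (reindex (hh p)) /=; last exact/onW_bij/hh_bij.
rewrite -(pair_bigA _ (fun b c => F (hh p (b, c)))) big_bool /= -big_split /=.
by apply: eq_bigr => c _; rewrite addrC.
Qed.

Lemma gl_max N (c : {set 'I_N}) (b : bool) :
  gl (hh ord_max (b, c)) = if b then rcons (gl c) N else gl c.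
Proof.
apply: (irr_sorted_eq ltn_trans ltnn (gl_sorted _)).
  case: b; last exact: gl_sorted.
  have := gl_sorted c; have := @gl_lt _ c.
  case: (gl c) => [|h t] //= Hlt Hs.
  rewrite rcons_path Hs /=; apply: Hlt.
  by have := mem_last h t; rewrite in_cons.
move=> i; have [lti|lei] := ltnP i N.+1; last first.
  rewrite gl_notin //; case: b => /=; last by rewrite gl_notin // ltnW.
  by rewrite mem_rcons in_cons gl_notin ?(ltnW lei) // orbF gtn_eqF.
have -> : i = val (Ordinal lti) by [].
rewrite gl_mem hh_mem.
case: unliftP => [j /(congr1 val) /= ->|/(congr1 val) /= ->].
  rewrite /bump /= leqNgt ltn_ord add0n.
  have E : (nat_of_ord j \in gl c) = (j \in c) by exact: (gl_mem c j).
  by case: b; rewrite ?mem_rcons ?in_cons ?ltn_eqF ?E.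
by case: b; rewrite ?mem_rcons ?in_cons ?eqxx // gl_notin.
Qed.

Lemma sorted_mapS (L : seq nat) : sorted ltn L -> sorted ltn (map succn L).
Proof. by rewrite sorted_map; apply: sub_sorted => x y /=; rewrite ltnS. Qed.

Lemma gl_min N (c : {set 'I_N}) (b : bool) :
  gl (hh ord0 (b, c)) = if b then 0%N :: map succn (gl c) else map succn (gl c).
Proof.
apply: (irr_sorted_eq ltn_trans ltnn (gl_sorted _)).
  have H := sorted_mapS (gl_sorted c).
  case: b => //=; rewrite (path_sortedE ltn_trans) H andbT.
  by apply/allP => x /mapP [y _ ->].
have memS L j : (j.+1 \in map succn L) = (j \in L) by rewrite (mem_map succn_inj).
have mem0 L : (0%N \in map succn L) = false by apply/negP => /mapP [y _].
move=> i; have [lti|lei] := ltnP i N.+1; last first.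
  have H : i \in map succn (gl c) = false.
    case: i lei => // i lei; rewrite memS gl_notin //.
  rewrite gl_notin //; case: b => //=; rewrite in_cons H orbF.
  by case: i lei {H}.
have -> : i = val (Ordinal lti) by [].
rewrite gl_mem hh_mem.
case: unliftP => [j /(congr1 val) /= ->|/(congr1 val) /= ->].
  rewrite /bump /= add1n.
  have E : (nat_of_ord j \in gl c) = (j \in c) by exact: (gl_mem c j).
  by case: b; rewrite ?in_cons /= memS E.
by case: b; rewrite ?in_cons ?eqxx ?mem0.
Qed.

Section Comb.
Variables (K : fieldType) (I : choiceType) (m : TV K I -> TV K I -> TV K I).
Hypothesis mlinl : forall (a : K) (x y z : TV K I), m (a *: x + y) z = a *: m x z + m y z.
Hypothesis mlinr : forall (a : K) (x y z : TV K I), m z (a *: x + y) = a *: m z x + m z y.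
Hypothesis massoc : forall x y z : TV K I, m (m x y) z = m x (m y z).

Local Notation TV := (TV K I).
Local Notation Vsp := (Vsp K I).

Lemma m0l z : m 0 z = 0.
Proof. by have := mlinl (-1) 0 0 z; rewrite !scaleN1r !addNr. Qed.
Lemma m0r z : m z 0 = 0.
Proof. by have := mlinr (-1) 0 0 z; rewrite !scaleN1r !addNr. Qed.
Lemma mZl a x z : m (a *: x) z = a *: m x z.
Proof. by have := mlinl a x 0 z; rewrite addr0 m0l addr0. Qed.
Lemma mZr a x z : m z (a *: x) = a *: m z x.
Proof. by have := mlinr a x 0 z; rewrite addr0 m0r addr0. Qed.
Lemma mDl x y z : m (x + y) z = m x z + m y z.
Proof. by have := mlinl 1 x y z; rewrite !scale1r. Qed.
Lemma mDr x y z : m z (x + y) = m z x + m z y.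
Proof. by have := mlinr 1 x y z; rewrite !scale1r. Qed.
Lemma mNl x z : m (- x) z = - m x z.
Proof. by rewrite -scaleN1r mZl scaleN1r. Qed.
Lemma mNr x z : m z (- x) = - m z x.
Proof. by rewrite -scaleN1r mZr scaleN1r. Qed.
Lemma mBl x y z : m (x - y) z = m x z - m y z.
Proof. by rewrite mDl mNl. Qed.
Lemma mBr x y z : m z (x - y) = m z x - m z y.
Proof. by rewrite mDr mNr. Qed.
Lemma m_suml (J : Type) (r : seq J) (P : pred J) (F : J -> TV) z :
  m (\sum_(j <- r | P j) F j) z = \sum_(j <- r | P j) m (F j) z.
Proof. by elim/big_rec2: _ => [|j y w _ <-]; rewrite ?m0l ?mDl. Qed.
Lemma m_sumr (J : Type) (r : seq J) (P : pred J) (F : J -> TV) z :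
  m z (\sum_(j <- r | P j) F j) = \sum_(j <- r | P j) m z (F j).
Proof. by elim/big_rec2: _ => [|j y w _ <-]; rewrite ?m0r ?mDr. Qed.

Definition slc (B : seq nat) (s : seq Vsp) : seq (seq Vsp) :=
  [seq drop ab.1 (take ab.2 s) | ab <- zip B (behead B)].
Definition bnds (n : nat) (L : seq nat) : seq nat := 0%N :: rcons (map succn L) n.
Definition mpl (t : seq TV) : TV := mprod1 m (head 0 t) (behead t).
Definition cp (s : seq Vsp) (L : seq nat) : TV :=
  mpl (map (@vtens K I) (slc (bnds (size s) L) s)).

Lemma slc_cons2 x y B s : slc [:: x, y & B] s = drop x (take y s) :: slc (y :: B) s.
Proof. by []. Qed.

Lemma slc_take k B s : all (fun b => b <= k)%N B -> slc B s = slc B (take k s).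
Proof.
elim: B => [|x [|y B] IH] //= /andP [hx /andP [hy hB]].
rewrite slc_cons2 [in RHS]slc_cons2 take_takel // IH //=.
by rewrite hy.
Qed.

Lemma slc_rcons b B x y s :
  slc (b :: rcons (rcons B x) y) s = rcons (slc (b :: rcons B x) s) (drop x (take y s)).
Proof.
elim: B b => [|b' B IH] b //=.
by rewrite slc_cons2 IH.
Qed.

Lemma slc_shift k B s : slc (map (addn k) B) s = slc B (drop k s).
Proof.
elim: B => [|x [|y B] IH] //=.
rewrite [map _ _]/= !slc_cons2 -IH /=; congr cons.
by rewrite take_drop drop_drop addnC [(y + k)%N]addnC.
Qed.

Lemma mpl_rcons x t y : mpl (x :: rcons t y) = m (mpl (x :: t)) y.
Proof.
elim: t x => [|z t IH] x //=.
by rewrite /mpl /= in IH *; rewrite IH massoc.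
Qed.

Lemma mpl_rcons' t y : t != [::] -> mpl (rcons t y) = m (mpl t) y.
Proof. by case: t => [|x t] // _; exact: mpl_rcons. Qed.

Lemma mpl_cons2 x y t : mpl [:: x, y & t] = m x (mpl (y :: t)).
Proof. by []. Qed.

Lemma cp_nil s : cp s [::] = vtens s.
Proof. by rewrite /cp /bnds /= take_size drop0. Qed.

Lemma cp_max s L N : all (fun j => j < N)%N L -> (N.+2 <= size s)%N ->
  cp s (rcons L N) = m (cp (take N.+1 s) L) (vtens (drop N.+1 s)).
Proof.
move=> HL Hs.
rewrite /cp /bnds map_rcons slc_rcons take_size map_rcons mpl_rcons'; last first.
  by rewrite -size_eq0 size_map /slc size_map size_zip size_behead /= size_rcons minnSS; case: minn.
rewrite size_takel; last exact: ltnW.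
congr (m (mpl (map _ _)) _).
apply: slc_take => /=; rewrite all_rcons leqnn /= all_map.
by apply: sub_all HL => j /= /ltnW.
Qed.

Lemma slc_cons_shift k Y s :
  slc (0%N :: map (addn k) (0%N :: Y)) s = take k s :: slc (0%N :: Y) (drop k s).
Proof.
rewrite [map _ _]/= addn0 slc_cons2 drop0.
have -> : k :: map (addn k) Y = map (addn k) (0%N :: Y) by rewrite /= addn0.
by rewrite slc_shift.
Qed.

Lemma cp_min s L off : (off.+1 <= size s)%N ->
  cp s (off :: map (addn off.+1) L) = m (vtens (take off.+1 s)) (cp (drop off.+1 s) L).
Proof.
move=> Hs.
have E : bnds (size s) (off :: map (addn off.+1) L) =
         0%N :: map (addn off.+1) (bnds (size (drop off.+1 s)) L).
  rewrite /bnds size_drop /= map_rcons subnKC // -!map_comp addn0.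
  by congr [:: _, _ & rcons _ _]; apply: eq_map => j /=; rewrite addnS.
rewrite /cp E /bnds slc_cons_shift.
by case: L {E} => [|j L].
Qed.
Definition Th N off s := \sum_(c : {set 'I_N})
   (-1) ^+ size (gl c) *: cp s (map (addn off) (gl c)).
Definition Fs s := Th (size s).-1 0 s.

Lemma map_add0 L : map (addn 0) L = L.
Proof. by rewrite (eq_map add0n) map_id. Qed.

Lemma ThetaMax N s : (N.+2 <= size s)%N ->
  Th N.+1 0 s = Th N 0 s - m (Th N 0 (take N.+1 s)) (vtens (drop N.+1 s)).
Proof.
move=> Hs; rewrite /Th (sum_sets_split ord_max) big_split /=; congr (_ + _).
  by apply: eq_bigr => c _; rewrite gl_max.
rewrite m_suml -sumrN; apply: eq_bigr => c _.
rewrite gl_max size_rcons exprS mulN1r scaleNr !map_add0 cp_max //; first by rewrite mZl.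
by apply/allP => j /gl_lt.
Qed.

Lemma ThetaMin N off s : (off + N.+2 <= size s)%N ->
  Th N.+1 off s = Th N off.+1 s - m (vtens (take off.+1 s)) (Th N 0 (drop off.+1 s)).
Proof.
move=> Hs; rewrite /Th (sum_sets_split ord0) big_split /=; congr (_ + _).
  apply: eq_bigr => c _; rewrite gl_min size_map -map_comp; congr (_ *: cp _ _).
  by apply: eq_map => j /=; rewrite addnS.
rewrite m_sumr -sumrN; apply: eq_bigr => c _.
rewrite gl_min /= size_map exprS mulN1r scaleNr map_add0 addn0 -map_comp.
have -> : [seq (addn off \o succn) i | i <- gl c] = map (addn off.+1) (gl c).
  by apply: eq_map => j /=; rewrite addnS.
rewrite cp_min ?mZr //; lia.
Qed.

Lemma Theta0 off s : Th 0 off s = vtens s.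
Proof.
rewrite /Th (big_pred1 set0); last first.
  by move=> c /=; apply/esym/eqP/setP => -[].
by rewrite /gl enum_set0 /= expr0 scale1r cp_nil.
Qed.

Lemma ThetaL N s : (N.+1 <= size s)%N ->
  Th N 0 s = vtens s - \sum_(k < N) m (Fs (take k.+1 s)) (vtens (drop k.+1 s)).
Proof.
elim: N s => [|N IH] s Hs; first by rewrite Theta0 big_ord0 subr0.
rewrite ThetaMax // IH ?(ltnW Hs) // big_ord_recr /= opprD addrA /Fs size_takel //.
exact: ltnW.
Qed.

Lemma ThetaR N off s : (off + N.+1 = size s)%N ->
  Th N off s = vtens s - \sum_(k < N) m (vtens (take (off + k).+1 s)) (Fs (drop (off + k).+1 s)).
Proof.
elim: N off => [|N IH] off Hs; first by rewrite Theta0 big_ord0 subr0.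
rewrite ThetaMin; last by rewrite Hs.
rewrite IH; last by rewrite addSnnS.
rewrite big_ord_recl /= addn0 opprD addrA addrAC; congr (_ - _ - _).
  by apply: eq_bigr => k _; rewrite /bump /= add1n addnS addSn.
rewrite /Fs size_drop -Hs; congr (m _ (Th _ _ _)); lia.
Qed.
End Comb.

Section Grouplike.
Variables (K : fieldType) (I : choiceType).
Local Notation TV := (TV K I).

Lemma mcoeff_mlift (A B : choiceType) (f : A -> {malg K[B]}) (x : {malg K[A]}) k :
  (mlift f x)@_k = \sum_(a <- msupp x) x@_a * (f a)@_k.
Proof. by rewrite /mlift raddf_sum; apply: eq_bigr => a _; rewrite /= mcoeffZ. Qed.

Lemma sum_ind (A : choiceType) (x : {malg K[A]}) a0 :
  \sum_(a <- msupp x) x@_a * (a == a0)%:R = x@_a0.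
Proof.
case: msuppP => [a0in|a0out].
  rewrite (big_fsetD1 a0) //= eqxx mulr1 big1_fset ?addr0 // => a.
  by rewrite in_fsetD1 => /andP [/negbTE -> _] _; rewrite mulr0.
by rewrite big1_fset // => a ain _; case: eqP ain => [->|_]; rewrite ?mulr0 // (negbTE a0out).
Qed.

Lemma coef_tens2 (x y : TV) (a b : seq I) : (tens2 x y)@_(a, b) = x@_a * y@_b.
Proof.
rewrite /tens2 mcoeff_mlift -sum_ind big_distrl /=; apply: eq_bigr => a' _.
rewrite mcoeff_mlift -mulrA; congr (_ * _).
have [->|ne] := eqVneq a' a.
  rewrite mul1r -sum_ind; apply: eq_bigr => b' _; rewrite mcoeffU.
  by rewrite xpair_eqE eqxx /=.
rewrite mul0r big1_seq // => b' _; rewrite mcoeffU xpair_eqE (negbTE ne) /= mulr0.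
by [].
Qed.

Lemma coef_coprod (x : TV) (w : seq I) : (coprod x)@_(w, w) = x@_(w ++ w).
Proof.
rewrite /coprod mcoeff_mlift -sum_ind; apply: eq_bigr => v _; congr (_ * _).
rewrite raddf_sum /=.
have [->|ne] := eqVneq v (w ++ w).
  have lt : (size w < (size (w ++ w)).+1)%N by rewrite size_cat ltnS leq_addr.
  rewrite (bigD1 (Ordinal lt)) //= mcoeffU take_size_cat // drop_size_cat // eqxx /=.
  rewrite big1 ?addr0 // => k /negbTE nek; rewrite mcoeffU.
  case: eqP => // -[E1 _]; have := congr1 size E1.
  rewrite size_takel; last by rewrite -ltnS.
  by move=> Hk; move: nek; rewrite -val_eqE /= Hk eqxx.
rewrite big1 // => k _; rewrite mcoeffU; case: eqP => // -[E1 E2].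
by move: ne; rewrite -(cat_take_drop k v) E1 E2 eqxx.
Qed.

Lemma grouplike (u : TV) : coprod u = tens2 u u -> counit u = 1 -> u = tone K I.
Proof.
move=> Hc H1.
have dbl w : u@_(w ++ w) = u@_w * u@_w by rewrite -coef_coprod Hc coef_tens2.
pose M := (\max_(v <- msupp u) size v)%N.
have HM v : v \in msupp u -> (size v <= M)%N.
  by move=> vin; apply: (@leq_bigmax_seq _ _ xpredT (fun v => size v) v).
have key d : forall w, (M - size w < d)%N -> w \in msupp u -> w != [::] -> False.
  elim: d => [|d IH] w // Hd win wne.
  have win2 : w ++ w \in msupp u.
    by rewrite -mcoeff_neq0 dbl mulf_neq0 // mcoeff_neq0.
  have := HM _ win2; rewrite size_cat => H2.
  apply: (IH (w ++ w)) => //; last by move: wne; rewrite -!size_eq0 size_cat; case: (size w).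
  rewrite size_cat; have : (0 < size w)%N by move: wne; rewrite -size_eq0 lt0n.
  move: (HM _ win); lia.
apply/malgP => k; rewrite mcoeffU.
have [<-|ne] := eqVneq [::] k; first by rewrite -H1.
rewrite /=; apply/eqP; rewrite mcoeff_eq0; apply/negP => kin.
by apply: (key (M - size k).+1 k) => //; rewrite eq_sym.
Qed.
End Grouplike.

Section Final.
Variables (K : fieldType) (I : choiceType) (m : TV K I -> TV K I -> TV K I).
Local Notation TV := (TV K I).
Local Notation Vsp := (Vsp K I).
Local Notation tone := (tone K I).

Definition mk (i : I) : Vsp := << i >>.

Lemma vtens_map w : vtens (map mk w) = << w >>.
Proof.
elim: w => [|i w IH] //.
rewrite /vtens /=; rewrite /vtens in IH; rewrite IH /mk mliftU; exact: mliftU.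
Qed.

Lemma cutprod_cp (ps : seq Vsp) (c : {set 'I_(size ps).-1}) : cutprod m c = cp m ps (gl c).
Proof.
have E : map succn [seq val j | j <- enum c] = [seq (val j).+1 | j <- enum c].
  by rewrite -map_comp.
by rewrite /cp /bnds /gl E.
Qed.

Lemma coprodU w : coprod (<< w >> : TV) = \sum_(k < (size w).+1) (<< (take k w, drop k w) >> : TT K I).
Proof. by rewrite /coprod mliftU. Qed.

Lemma counitU w : counit (<< w >> : TV) = (w == [::])%:R.
Proof. by rewrite /counit mcoeffU. Qed.
Lemma decomp (A : choiceType) (x : {malg K[A]}) : x = \sum_(a <- msupp x) x@_a *: << a >>.
Proof.
rewrite {1}(monalgE x); apply: eq_bigr => a _; apply/malgP => k.
by rewrite mcoeffZ !mcoeffU; case: eqP => _; rewrite ?mulr1 ?mulr0.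
Qed.

Lemma antipode_gen (u : TV) (G : seq I * seq I -> TV) (x : TV) :
  (forall w, mlift G (coprod (<< w >> : TV)) = counit (<< w >> : TV) *: u) ->
  mlift G (coprod x) = counit x *: u.
Proof.
move=> H; rewrite {1 2}(decomp x) /coprod !(mlift_sum _ (msupp x) xpredT).
rewrite /counit raddf_sum scaler_suml; apply: eq_bigr => a _.
by rewrite mliftZ mliftZ -/(coprod _) H /= mcoeffZ scalerA.
Qed.

Lemma sum_split3 (V : zmodType) (F : nat -> V) n :
  \sum_(k < n.+2) F k = F 0%N + \sum_(k < n) F k.+1 + F n.+1.
Proof.
rewrite big_ord_recl big_ord_recr /= addrA.
by rewrite /bump /= add1n.
Qed.

Lemma big_ord_eq (V : zmodType) (F : nat -> V) a b : a = b ->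
  \sum_(k < a) F k = \sum_(k < b) F k.
Proof. by move->. Qed.

Variables (S : TV -> TV).
Hypothesis mlinl : forall (a : K) (x y z : TV), m (a *: x + y) z = a *: m x z + m y z.
Hypothesis mlinr : forall (a : K) (x y z : TV), m z (a *: x + y) = a *: m z x + m z y.
Hypothesis massoc : forall x y z : TV, m (m x y) z = m x (m y z).
Hypothesis m1l : forall x, m tone x = x.
Hypothesis m1r : forall x, m x tone = x.
Hypothesis Stone : S tone = tone.
Hypothesis Sv : forall v, v != [::] -> S << v >> = - Fs m (map mk v).

Lemma left_basis w :
  \sum_(k < (size w).+1) m (S << take k w >>) << drop k w >> = (w == [::])%:R *: tone.
Proof.
have [->|wne] := eqVneq w [::].
  by rewrite big_ord1 /= Stone m1l scale1r.
have Hs : size w = (size w).-1.+1 by rewrite prednK // lt0n size_eq0.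
rewrite scale0r.
have HL := @ThetaL K I m mlinl massoc (size w).-1 (map mk w).
rewrite size_map -Hs in HL; specialize (HL (leqnn _)).
rewrite (big_ord_eq (fun k => m (S << take k w >>) << drop k w >>) (congr1 succn Hs)).
rewrite (sum_split3 (fun k => m (S << take k w >>) << drop k w >>)) take0 drop0 Stone m1l -Hs.
rewrite take_size drop_size m1r (Sv wne) /Fs size_map HL vtens_map.
set X := \sum_(k < _) m (Fs _ _) _.
have -> : \sum_(i < (size w).-1) m (S << take i.+1 w >>) << drop i.+1 w >> = - X.
  rewrite /X -sumrN; apply: eq_bigr => k _.
  have kle : (k.+1 <= size w)%N by have := ltn_ord k; move: Hs; lia.
  rewrite Sv; last by rewrite -size_eq0 size_takel.
  by rewrite map_take -vtens_map map_drop mNl.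
by rewrite subrr.
Qed.

Lemma right_basis w :
  \sum_(k < (size w).+1) m << take k w >> (S << drop k w >>) = (w == [::])%:R *: tone.
Proof.
have [->|wne] := eqVneq w [::].
  by rewrite big_ord1 /= Stone m1l scale1r.
have Hs : size w = (size w).-1.+1 by rewrite prednK // lt0n size_eq0.
rewrite scale0r.
have HR := @ThetaR K I m mlinr (size w).-1 0 (map mk w).
rewrite add0n size_map -Hs in HR; specialize (HR erefl).
rewrite (big_ord_eq (fun k => m << take k w >> (S << drop k w >>)) (congr1 succn Hs)).
rewrite (sum_split3 (fun k => m << take k w >> (S << drop k w >>))) take0 drop0 m1l -Hs.
rewrite take_size drop_size Stone m1r (Sv wne) /Fs size_map HR vtens_map.
set X := \sum_(k < _) m (vtens _) _.
have -> : \sum_(i < (size w).-1) m << take i.+1 w >> (S << drop i.+1 w >>) = - X.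
  rewrite /X -sumrN; apply: eq_bigr => k _; rewrite add0n.
  have klt : (k.+1 < size w)%N by have := ltn_ord k; move: Hs; lia.
  rewrite Sv; last by rewrite -size_eq0 size_drop subn_eq0 -ltnNge.
  by rewrite map_drop -vtens_map map_take mNr.
by rewrite opprB addrAC subrK subrr.
Qed.
End Final.

Unset Implicit Arguments.
Set Strict Implicit.

Theorem mainTheorem16 (K : fieldType) (I : choiceType)
  (m : TV K I -> TV K I -> TV K I) (u : TV K I) (S : TV K I -> TV K I) :
  is_bialgebra m u ->
  (forall (a : K) (x y : TV K I), S (a *: x + y) = a *: S x + S y) ->
  S (tone K I) = tone K I ->
  (forall ps : seq (Vsp K I), (0 < size ps)%N ->
     S (vtens ps) =
       - \sum_(c : {set 'I_(size ps).-1}) (-1) ^+ #|c| *: cutprod m c) ->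
  is_antipode m u S.
Proof.
move=> [mlinl [mlinr [massoc [munit [mcomp [mcop [mcounit mcu]]]]]]] _ Stone HS.
have ut : u = tone K I := grouplike mcop mcu.
rewrite ut in munit *.
have m1l x : m (tone K I) x = x by case: (munit x).
have m1r x : m x (tone K I) = x by case: (munit x).
have Sv v : v != [::] -> S << v >> = - Fs m (map (@mk K I) v).
  move=> vne; rewrite -vtens_map HS; last by rewrite size_map lt0n size_eq0.
  congr (- _); rewrite /Fs /Th; apply: eq_bigr => c _.
  by rewrite gl_size map_add0 cutprod_cp.
move=> x; split; apply: antipode_gen => w; rewrite coprodU counitU.
  rewrite (mlift_sum _ _ xpredT) -(left_basis mlinl massoc m1l m1r Stone Sv w).
  by apply: eq_bigr => k _; rewrite mliftU.
rewrite (mlift_sum _ _ xpredT) -(right_basis mlinr m1l m1r Stone Sv w).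
by apply: eq_bigr => k _; rewrite mliftU.
Qed.
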